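(* Assume the environment is elliptic. Let $\mathfrak{m}_n\in\mathbb{R}^m$ (column vectors) satisfy $\mathfrak{m}_n=P_n\mathfrak{m}_{n+1}+R_n\mathfrak{m}_n+Q_n\mathfrak{m}_{n-1}$ for all $n$, and let $\rho_n$ (row vectors) satisfy $\rho_n=\rho_{n-1}P_{n-1}+\rho_nR_n+\rho_{n+1}Q_{n+1}$ together with $\rho_n=\rho_{n+1}\alpha_n$ and $\rho_{n+1}=\rho_n\alpha^-_{n+1}$ for all $n$. Then there exists a constant $c$ such that for all $n$ $$\rho_{n+1}Q_{n+1}(\mathfrak{m}_n-\zeta_n\mathfrak{m}_{n+1})=c,\qquad\rho_nP_n(\mathfrak{m}_{n+1}-\zeta^-_{n+1}\mathfrak{m}_n)=-c.$$
   Context: $m\ge1$; an environment is $(P_n,Q_n,R_n)_{n\in\mathbb{Z}}$, nonnegative $m\times m$ matrices with $(P_n+Q_n+R_n)\mathbf{1}=\mathbf{1}$. Norm $\|x\|=\max|x_i|$ with induced matrix norm. Ellipticity: there are $\bar\varepsilon>0$, $k_0$ with $\|R_n^{k_0}\|\le1-\bar\varepsilon$, $((I-R_n)^{-1}P_n)(i,j)\ge\bar\varepsilon$, $((I-R_n)^{-1}Q_n)(i,j)\ge\bar\varepsilon$ for all $n,i,j$. $\zeta_n=\lim_{a\to-\infty}\psi_{n,a}$, where $\psi_{a,a}$ is any stochastic matrix and $\psi_{n,a}=(I-R_n-Q_n\psi_{n-1,a})^{-1}P_n$ for $n>a$ (the limit exists, is independent of choices, and satisfies $\zeta_n=(I-R_n-Q_n\zeta_{n-1})^{-1}P_n$);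 symmetrically $\zeta^-_n$ is the stochastic sequence with $\zeta^-_n=(I-R_n-P_n\zeta^-_{n+1})^{-1}Q_n$ obtained as the analogous limit from $+\infty$. $\alpha_n=Q_{n+1}(I-R_n-Q_n\zeta_{n-1})^{-1}$ and $\alpha^-_n=P_{n-1}(I-R_n-P_n\zeta^-_{n+1})^{-1}$. *)

(* Defs.v *)
From HB Require Import structures.
From mathcomp Require Import all_boot all_order all_algebra.
From mathcomp Require Import all_classical all_reals topology normedtype sequences.
Set Implicit Arguments. Unset Strict Implicit. Unset Printing Implicit Defensive.
Import Order.TTheory GRing.Theory Num.Theory numFieldNormedType.Exports.
Local Open Scope classical_set_scope.
Local Open Scope ring_scope.

Section Env.
Variables (R : realType) (m : nat).
Notation M := 'M[R]_m.

(* induced matrix norm of the max-norm: maximal absolute row sum *)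
Definition mxnorm_inf (A : M) : R := \big[Num.max/0]_(i < m) \sum_(j < m) `|A i j|.

Definition mx_nonneg (A : M) : Prop := forall i j, 0 <= A i j.

Definition ones : 'cV[R]_m := const_mx 1.

Definition stochastic (A : M) : Prop := mx_nonneg A /\ A *m ones = ones.

Definition environment (P Q Rm : int -> M) : Prop :=
  forall n, [/\ mx_nonneg (P n), mx_nonneg (Q n), mx_nonneg (Rm n) &
                (P n + Q n + Rm n) *m ones = ones].

Definition elliptic (P Q Rm : int -> M) : Prop :=
  exists (eps : R) (k0 : nat), 0 < eps /\ forall n,
    [/\ mxnorm_inf (Rm n ^+ k0) <= 1 - eps,
        forall i j, eps <= (invmx (1%:M - Rm n) *m P n) i j &
        forall i j, eps <= (invmx (1%:M - Rm n) *m Q n) i j].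

(* psi S a k = psi_{a+k, a} with psi_{a,a} = S a *)
Fixpoint psi (P Q Rm : int -> M) (S : int -> M) (a : int) (k : nat) : M :=
  match k with
  | O => S a
  | k'.+1 => invmx (1%:M - Rm (a + k%:Z) - Q (a + k%:Z) *m psi P Q Rm S a k')
             *m P (a + k%:Z)
  end.

(* psim S a k = psi^-_{a-k, a} with psi^-_{a,a} = S a *)
Fixpoint psim (P Q Rm : int -> M) (S : int -> M) (a : int) (k : nat) : M :=
  match k with
  | O => S a
  | k'.+1 => invmx (1%:M - Rm (a - k%:Z) - P (a - k%:Z) *m psim P Q Rm S a k')
             *m Q (a - k%:Z)
  end.

(* zeta_n = lim_{a -> -oo} psi_{n,a}, for every choice of stochastic psi_{a,a} *)
Definition is_zeta (P Q Rm : int -> M) (zeta : int -> M) : Prop :=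
  forall S : int -> M, (forall a, stochastic (S a)) ->
  forall n i j, (fun k : nat => psi P Q Rm S (n - k%:Z) k i j) @ \oo --> zeta n i j.

(* zeta^-_n = lim_{a -> +oo} psi^-_{n,a} *)
Definition is_zetam (P Q Rm : int -> M) (zetam : int -> M) : Prop :=
  forall S : int -> M, (forall a, stochastic (S a)) ->
  forall n i j, (fun k : nat => psim P Q Rm S (n + k%:Z) k i j) @ \oo --> zetam n i j.

Definition alpha (P Q Rm zeta : int -> M) (n : int) : M :=
  Q (n + 1) *m invmx (1%:M - Rm n - Q n *m zeta (n - 1)).

Definition alpham (P Q Rm zetam : int -> M) (n : int) : M :=
  P (n - 1) *m invmx (1%:M - Rm n - P n *m zetam (n + 1)).

End Env.

(* Main.v *)
Require Import Defs.
From HB Require Import structures.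
From mathcomp Require Import all_boot all_order all_algebra.
From mathcomp Require Import all_classical all_reals topology normedtype sequences.
From mathcomp Require Import lra zify.
Import Order.TTheory GRing.Theory Num.Theory numFieldNormedType.Exports.
Set Implicit Arguments.
Unset Strict Implicit.
Local Open Scope classical_set_scope.
Local Open Scope ring_scope.

Section Gen.
Variables (R : realType) (m : nat).
Implicit Types (A : 'M[R]_m) (x : 'cV[R]_m).

Definition contr A := forall x b, 0 <= b -> (forall j, `|x j 0| <= b) ->
  forall i, `|(A *m x) i 0| <= b.

Lemma bound_mul A x b s i : 0 <= b -> (forall j, `|x j 0| <= b) ->
  \sum_j `|A i j| <= s -> `|(A *m x) i 0| <= s * b.
Proof.
move=> b0 hx hs; rewrite mxE.
apply: (le_trans (ler_norm_sum _ _ _)).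
apply: (@le_trans _ _ (\sum_j `|A i j| * b)).
  by apply: ler_sum => j _; rewrite normrM ler_wpM2l.
by rewrite -mulr_suml ler_wpM2r.
Qed.

Lemma bigmax_ge0 (f : 'I_m -> R) : (forall j, 0 <= f j) -> 0 <= \big[Num.max/0]_j f j.
Proof. by move=> hf; elim/big_ind: _ => [//| u v hu hv | j _]; [rewrite le_max hu | apply: hf]. Qed.

Lemma le_bigmaxR (f : 'I_m -> R) j : f j <= \big[Num.max/0]_j f j.
Proof. exact: le_bigmax. Qed.

Lemma bigmax_leR (f : 'I_m -> R) c : 0 <= c -> (forall j, f j <= c) ->
  \big[Num.max/0]_j f j <= c.
Proof. by move=> c0 h; apply: bigmax_le. Qed.

Lemma zero_of_contract x c : 0 <= c < 1 ->
  (forall b, 0 <= b -> (forall j, `|x j 0| <= b) -> forall i, `|x i 0| <= c * b) ->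
  x = 0.
Proof.
move=> /andP[c0 c1] h.
set mu := \big[Num.max/0]_j `|x j 0|.
have mu0 : 0 <= mu by apply: bigmax_ge0 => j.
have hx : forall j, `|x j 0| <= mu by move=> j; apply: (le_bigmaxR (fun j => `|x j 0|)).
have : mu <= c * mu by apply: bigmax_leR; [rewrite mulr_ge0 | exact: h].
move=> hmu.
have mu_le0 : mu <= 0 by nra.
apply/matrixP => i j; rewrite (ord1 j) mxE.
by apply/eqP; rewrite -normr_le0 (le_trans (hx i)).
Qed.

Lemma unit_of_inj A : (forall x, A *m x = 0 -> x = 0) -> A \in unitmx.
Proof.
move=> h; rewrite -unitmx_tr unitmxE unitfE; apply/negP => /det0P [v nv vA].
have : A *m v^T = 0 by rewrite -[A]trmxK -trmx_mul vA trmx0.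
move/h => /(congr1 trmx); rewrite trmxK trmx0 => v0.
by rewrite v0 eqxx in nv.
Qed.


Lemma cvg_sumR (n : nat) (u : 'I_n -> nat -> R) (l : 'I_n -> R) :
  (forall j, u j @ \oo --> l j) -> (fun k => \sum_j u j k) @ \oo --> \sum_j l j.
Proof.
move=> H.
apply: (@cvg_big R^o 'I_n +%R 0 xpredT _ _ _ _ _ _ _) => //.
exact: add_continuous.
Qed.

Lemma cvg_le_const (u : nat -> R) (l b : R) :
  u @ \oo --> l -> (forall k, u k <= b) -> l <= b.
Proof.
move=> ul ub. apply: (ler_cvg_to ul (cvg_cst b)). by near=> k.
Unshelve. all: by end_near.
Qed.

Lemma mul_lim p q r (A : nat -> 'M[R]_(p, q)) (B : nat -> 'M[R]_(q, r)) (LA : 'M[R]_(p, q)) (LB : 'M[R]_(q, r)) :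
  (forall i j, (fun k => A k i j) @ \oo --> LA i j) ->
  (forall i j, (fun k => B k i j) @ \oo --> LB i j) ->
  forall i j, (fun k => (A k *m B k) i j) @ \oo --> (LA *m LB) i j.
Proof.
move=> hA hB i j; rewrite mxE.
under eq_cvg do rewrite mxE.
apply: cvg_sumR => l.
exact: cvgM.
Qed.

Lemma contr_lim (A : nat -> 'M[R]_m) (L : 'M[R]_m) :
  (forall k, contr (A k)) -> (forall i j, (fun k => A k i j) @ \oo --> L i j) -> contr L.
Proof.
move=> hA hL x b b0 hx i.
have hc : forall i j, (fun k : nat => x i j) @ \oo --> x i j by move=> *; exact: cvg_cst.
have := @mul_lim _ _ _ A (fun _ => x) L x hL hc i 0 => /cvg_norm h.
exact: (@cvg_le_const (fun k => `|(A k *m x) i 0|) _ b h (fun k => hA k x b b0 hx i)).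
Qed.
End Gen.
Arguments contr {R m}.

Section Step.
Variables (R : realType) (m : nat) (hm : (0 < m)%N) (P Q Rr : 'M[R]_m) (eps : R) (k0 : nat).
Hypotheses (heps : 0 < eps) (hnorm : mxnorm_inf (Rr ^+ k0) <= 1 - eps)
 (hH : forall i j, eps <= (invmx (1%:M - Rr) *m P) i j)
 (hG : forall i j, eps <= (invmx (1%:M - Rr) *m Q) i j)
 (hsum : (P + Q + Rr) *m ones R m = ones R m).

Lemma unitIR : 1%:M - Rr \in unitmx.
Proof.
apply: unit_of_inj => x hx.
have xR : x = Rr *m x.
  by move: hx; rewrite mulmxBl mul1mx => /eqP; rewrite subr_eq0 => /eqP.
have xRk : forall k, x = Rr ^+ k *m x.
  elim => [|k ih]; first by rewrite expr0 mul1mx.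
  by rewrite exprS -mulmxE -mulmxA -ih.
have n0 : 0 <= mxnorm_inf (Rr ^+ k0).
  by apply: bigmax_ge0 => i; apply: sumr_ge0 => j _.
apply: (@zero_of_contract _ _ x (1 - eps)).
  apply/andP; split; first exact: le_trans n0 hnorm. have := heps. lra.
move=> b b0 hb i; rewrite (xRk k0).
apply: (le_trans (@bound_mul _ _ _ _ b (mxnorm_inf (Rr ^+ k0)) i _ _ _)) => //.
  exact: (@le_bigmaxR _ _ (fun i => \sum_j `|(Rr ^+ k0) i j|) i).
by rewrite ler_wpM2r.
Qed.

Let G := invmx (1%:M - Rr) *m Q.
Let H := invmx (1%:M - Rr) *m P.
Let i0 : 'I_m := Ordinal hm.

Lemma rowsum i : \sum_j G i j + \sum_j H i j = 1.
Proof.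
have e : (G + H) *m ones R m = ones R m.
  rewrite /G /H -mulmxDr -mulmxA.
  have -> : (Q + P) *m ones R m = (1%:M - Rr) *m ones R m.
    rewrite mulmxBl mul1mx -{2}hsum !mulmxDl; rewrite [P *m _ + _]addrC; by rewrite addrK.
  by rewrite mulKmx // unitIR.
move: (congr1 (fun M : 'cV[R]_m => M i 0) e); rewrite !mxE => <-.
by rewrite -big_split; apply: eq_bigr => j _; rewrite !mxE mulr1.
Qed.

Lemma Hrow_ge i : eps <= \sum_j H i j.
Proof.
rewrite (bigD1 i0) //=; apply: (le_trans (hH i i0)); rewrite lerDl.
by apply: sumr_ge0 => j _; apply: le_trans (hH i j); apply: ltW.
Qed.

Lemma Grow_ge0 i : 0 <= \sum_j G i j.
Proof. by apply: sumr_ge0 => j _; apply: le_trans (hG i j); apply: ltW. Qed.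

Lemma Gabs i : \sum_j `|G i j| = \sum_j G i j.
Proof. by apply: eq_bigr => j _; rewrite ger0_norm //; apply: le_trans (hG i j); apply: ltW. Qed.

Lemma Habs i : \sum_j `|H i j| = \sum_j H i j.
Proof. by apply: eq_bigr => j _; rewrite ger0_norm //; apply: le_trans (hH i j); apply: ltW. Qed.

Lemma factor (psi : 'M[R]_m) : (1%:M - Rr) *m (1%:M - G *m psi) = 1%:M - Rr - Q *m psi.
Proof. by rewrite mulmxBr mulmx1 mulmxA /G mulKVmx // unitIR. Qed.

Lemma unitA (psi : 'M[R]_m) : contr psi -> 1%:M - Rr - Q *m psi \in unitmx.
Proof.
have he := heps; move=> hpsi; rewrite -factor unitmx_mul unitIR /=.
apply: unit_of_inj => x hx.
have ex : x = G *m (psi *m x).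
  by move: hx; rewrite mulmxBl mul1mx mulmxA => /eqP; rewrite subr_eq0 => /eqP.
have := rowsum i0; have := Hrow_ge i0; have := Grow_ge0 i0 => g0 h0 s0.
apply: (@zero_of_contract _ _ x (1 - eps)); first by apply/andP; split; lra.
move=> b b0 hb i; rewrite ex.
apply: bound_mul => //; first exact: hpsi.
rewrite Gabs; have := rowsum i; have := Hrow_ge i; lra.
Qed.

Lemma contrF (psi : 'M[R]_m) : contr psi -> contr (invmx (1%:M - Rr - Q *m psi) *m P).
Proof.
have he := heps; move=> hpsi x b b0 hx.
set y := (_ *m P) *m x.
have ey : y = G *m (psi *m y) + H *m x.
  have e1 : (1%:M - Rr) *m ((1%:M - G *m psi) *m y) = P *m x.
    by rewrite mulmxA factor /y -mulmxA mulKVmx // unitA.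
  have e2 : (1%:M - G *m psi) *m y = H *m x.
    by rewrite /H -mulmxA -e1 mulKmx // unitIR.
  by move: e2; rewrite mulmxBl mul1mx -mulmxA => <-; rewrite addrC subrK.
set mu := \big[Num.max/0]_j `|y j 0|.
have mu0 : 0 <= mu by apply: bigmax_ge0 => j.
have hy : forall j, `|y j 0| <= mu by move=> j; exact: (@le_bigmaxR _ _ (fun j => `|y j 0|) j).
have bnd : forall i, `|y i 0| <= (\sum_j G i j) * mu + (\sum_j H i j) * b.
  move=> i; rewrite ey mxE; apply: (le_trans (ler_normD _ _)); apply: lerD.
    by rewrite -Gabs; apply: bound_mul => //; exact: hpsi.
  by rewrite -Habs; apply: bound_mul.
suff : mu <= b by move=> mub i; apply: le_trans (hy i) mub.
case: (lerP mu b) => // hlt.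
have : mu <= mu - eps * (mu - b).
  apply: bigmax_leR.
    have := bnd i0; have := rowsum i0; have := Hrow_ge i0; have := Grow_ge0 i0.
    have := normr_ge0 (y i0 0); nra.
  move=> i; have := bnd i; have := rowsum i; have := Hrow_ge i; nra.
nra.
Qed.
End Step.
Lemma cvg_mxB (R : realType) p q (X Y : nat -> 'M[R]_(p, q)) (LX LY : 'M[R]_(p, q)) :
  (forall i j, (fun k => X k i j) @ \oo --> LX i j) ->
  (forall i j, (fun k => Y k i j) @ \oo --> LY i j) ->
  forall i j, (fun k => (X k - Y k) i j) @ \oo --> (LX - LY) i j.
Proof.
move=> hX hY i j; rewrite !mxE; under eq_cvg do rewrite !mxE.
exact: cvgB.
Qed.

Lemma int_const (T : Type) (f : int -> T) :
  (forall n, f (n + 1) = f n) -> forall n, f n = f 0.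
Proof.
move=> h.
have hp : forall k : nat, f k%:Z = f 0.
  elim=> [//|k ih]; rewrite -ih -(h k%:Z).
  have -> : k.+1%:Z = k%:Z + 1 by lia.
  done.
have hn : forall k : nat, f (- k%:Z) = f 0.
  elim=> [//|k ih]; rewrite -ih.
  have -> : - k%:Z = - k.+1%:Z + 1 by lia.
  by rewrite h.
by case=> k; [exact: hp | rewrite NegzE; exact: hn].
Qed.

Lemma zmod_id2 (V : zmodType) (a b c e : V) : a + b + c - b - e - c = a - e.
Proof.
by rewrite [a + b + c]addrAC addrK addrAC addrK.
Qed.

Lemma zmod_id1 (V : zmodType) (a b c e : V) : a + b + c - b - e - a = c - e.
Proof.
by rewrite [a + b + c]addrAC addrK addrAC [a + c]addrC addrK.
Qed.

Unset Implicit Arguments.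
Theorem lemma4p1 (R : realType) (m : nat) (hm : (0 < m)%N)
  (P Q Rm : int -> 'M[R]_m) (zeta zetam : int -> 'M[R]_m)
  (mm : int -> 'cV[R]_m) (rho : int -> 'rV[R]_m) :
  environment P Q Rm ->
  elliptic P Q Rm ->
  is_zeta P Q Rm zeta ->
  is_zetam P Q Rm zetam ->
  (forall n, mm n = P n *m mm (n + 1) + Rm n *m mm n + Q n *m mm (n - 1)) ->
  (forall n, rho n = rho (n - 1) *m P (n - 1) + rho n *m Rm n
                     + rho (n + 1) *m Q (n + 1)) ->
  (forall n, rho n = rho (n + 1) *m alpha P Q Rm zeta n) ->
  (forall n, rho (n + 1) = rho n *m alpham P Q Rm zetam (n + 1)) ->
  exists c : R, forall n : int,
    rho (n + 1) *m Q (n + 1) *m (mm n - zeta n *m mm (n + 1)) = c%:M /\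
    rho n *m P n *m (mm (n + 1) - zetam (n + 1) *m mm n) = (- c)%:M.
Proof.
move=> hEnv [eps [k0 [heps hE]]] hzeta hzetam hmm _ halpha halpham.
have hsumPQ : forall n, (P n + Q n + Rm n) *m ones R m = ones R m.
  by move=> n; case: (hEnv n).
have hsumQP : forall n, (Q n + P n + Rm n) *m ones R m = ones R m.
  by move=> n; rewrite (addrC (Q n)); exact: hsumPQ.
have UA : forall n psi, contr psi -> 1%:M - Rm n - Q n *m psi \in unitmx.
  move=> n psi; case: (hE n) => h1 h2 h3; exact: (unitA hm heps h1 h2 h3 (hsumPQ n)).
have FA : forall n psi, contr psi -> contr (invmx (1%:M - Rm n - Q n *m psi) *m P n).
  move=> n psi; case: (hE n) => h1 h2 h3; exact: (contrF hm heps h1 h2 h3 (hsumPQ n)).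
have UB : forall n psi, contr psi -> 1%:M - Rm n - P n *m psi \in unitmx.
  move=> n psi; case: (hE n) => h1 h2 h3; exact: (unitA hm heps h1 h3 h2 (hsumQP n)).
have FB : forall n psi, contr psi -> contr (invmx (1%:M - Rm n - P n *m psi) *m Q n).
  move=> n psi; case: (hE n) => h1 h2 h3; exact: (contrF hm heps h1 h3 h2 (hsumQP n)).
pose S := fun _ : int => (1%:M : 'M[R]_m).
have hS : forall a, stochastic (S a).
  move=> a; split; last by rewrite /S mul1mx.
  by move=> i j; rewrite /S mxE; exact: ler0n.
have c1 : contr (1%:M : 'M[R]_m) by move=> x b b0 hx i; rewrite mul1mx; exact: hx.
have hpsi : forall k a, contr (psi P Q Rm S a k).
  by elim=> [|k ih] a /=; [exact: c1 | exact: FA].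
have hpsim : forall k a, contr (psim P Q Rm S a k).
  by elim=> [|k ih] a /=; [exact: c1 | exact: FB].
have hz : forall n, contr (zeta n).
  by move=> n; exact: (contr_lim (fun k => hpsi k (n - k%:Z)) (hzeta S hS n)).
have hzm : forall n, contr (zetam n).
  by move=> n; exact: (contr_lim (fun k => hpsim k (n + k%:Z)) (hzetam S hS n)).
have K1 : forall n, (1%:M - Rm n - Q n *m zeta (n - 1)) *m zeta n = P n.
  move=> n.
  have cv_v : forall i j, (fun k : nat => psi P Q Rm S (n - k.+1%:Z) k i j) @ \oo --> zeta (n-1) i j.
    move=> i j; have := hzeta S hS (n - 1) i j.
    have -> : (fun k : nat => psi P Q Rm S (n - k.+1%:Z) k i j) = (fun k : nat => psi P Q Rm S (n - 1 - k%:Z) k i j).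
      apply: funext => k; have -> : n - k.+1%:Z = n - 1 - k%:Z by lia.
      done.
    done.
  have cv_u : forall i j, (fun k : nat => psi P Q Rm S (n - k.+1%:Z) k.+1 i j) @ \oo --> zeta n i j.
    by move=> i j; have := hzeta S hS n i j; rewrite -cvg_shiftS.
  have hc1 : forall i j, (fun k : nat => (1%:M - Rm n : 'M[R]_m) i j) @ \oo --> (1%:M - Rm n : 'M[R]_m) i j.
    by move=> *; exact: cvg_cst.
  have hcQ : forall i j, (fun k : nat => Q n i j) @ \oo --> Q n i j.
    by move=> *; exact: cvg_cst.
  have cvA := cvg_mxB hc1 (mul_lim hcQ cv_v).
  have L := mul_lim cvA cv_u.
  have E : forall k, (1%:M - Rm n - Q n *m psi P Q Rm S (n - k.+1%:Z) k) *m psi P Q Rm S (n - k.+1%:Z) k.+1 = P n.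
    by move=> k /=; rewrite subrK mulKVmx // UA.
  apply/matrixP => i j.
  have L2 : (fun k : nat => ((1%:M - Rm n - Q n *m psi P Q Rm S (n - k.+1%:Z) k) *m psi P Q Rm S (n - k.+1%:Z) k.+1) i j) @ \oo --> P n i j.
    by under eq_cvg do rewrite E; exact: cvg_cst.
  exact: (@cvg_unique R^o _ _ _ _ _ (L i j) L2).
have K2 : forall n, (1%:M - Rm n - P n *m zetam (n + 1)) *m zetam n = Q n.
  move=> n.
  have cv_v : forall i j, (fun k : nat => psim P Q Rm S (n + k.+1%:Z) k i j) @ \oo --> zetam (n+1) i j.
    move=> i j; have := hzetam S hS (n + 1) i j.
    have -> : (fun k : nat => psim P Q Rm S (n + k.+1%:Z) k i j) = (fun k : nat => psim P Q Rm S (n + 1 + k%:Z) k i j).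
      apply: funext => k; have -> : n + k.+1%:Z = n + 1 + k%:Z by lia.
      done.
    done.
  have cv_u : forall i j, (fun k : nat => psim P Q Rm S (n + k.+1%:Z) k.+1 i j) @ \oo --> zetam n i j.
    by move=> i j; have := hzetam S hS n i j; rewrite -cvg_shiftS.
  have hc1 : forall i j, (fun k : nat => (1%:M - Rm n : 'M[R]_m) i j) @ \oo --> (1%:M - Rm n : 'M[R]_m) i j.
    by move=> *; exact: cvg_cst.
  have hcP : forall i j, (fun k : nat => P n i j) @ \oo --> P n i j.
    by move=> *; exact: cvg_cst.
  have cvA := cvg_mxB hc1 (mul_lim hcP cv_v).
  have L := mul_lim cvA cv_u.
  have E : forall k, (1%:M - Rm n - P n *m psim P Q Rm S (n + k.+1%:Z) k) *m psim P Q Rm S (n + k.+1%:Z) k.+1 = Q n.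
    by move=> k /=; rewrite addrK mulKVmx // UB.
  apply/matrixP => i j.
  have L2 : (fun k : nat => ((1%:M - Rm n - P n *m psim P Q Rm S (n + k.+1%:Z) k) *m psim P Q Rm S (n + k.+1%:Z) k.+1) i j) @ \oo --> Q n i j.
    by under eq_cvg do rewrite E; exact: cvg_cst.
  exact: (@cvg_unique R^o _ _ _ _ _ (L i j) L2).
pose A := fun n => 1%:M - Rm n - Q n *m zeta (n - 1).
pose B := fun n => 1%:M - Rm n - P n *m zetam (n + 1).
have RA : forall n, rho n *m A n = rho (n + 1) *m Q (n + 1).
  by move=> n; rewrite {1}(halpha n) /alpha mulmxA mulmxKV // UA.
have RB : forall n, rho (n + 1) *m B (n + 1) = rho n *m P n.
  move=> n; rewrite {1}(halpham n) /alpham.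
  have -> : n + 1 - 1 = n by rewrite addrK.
  by rewrite mulmxA mulmxKV // UB.
pose c := fun n => rho (n + 1) *m Q (n + 1) *m (mm n - zeta n *m mm (n + 1)).
pose d := fun n => rho n *m P n *m (mm (n + 1) - zetam (n + 1) *m mm n).
have cform : forall n, c n = rho n *m (Q n *m (mm (n - 1) - zeta (n - 1) *m mm n)).
  move=> n; rewrite /c -RA -mulmxA; congr (_ *m _).
  rewrite mulmxBr mulmxA K1 /A !mulmxBl mul1mx {1}(hmm n) zmod_id1.
  by rewrite mulmxBr mulmxA.
have cstep : forall n, c (n + 1) = c n.
  by move=> n; rewrite (cform (n + 1)) addrK /c mulmxA.
have dstep : forall n, d n = d (n + 1).
  move=> n; rewrite /d -RB -mulmxA -mulmxA; congr (_ *m _).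
  rewrite mulmxBr mulmxA K2 /B !mulmxBl mul1mx {1}(hmm (n + 1)).
  have -> : n + 1 - 1 = n by rewrite addrK.
  by rewrite zmod_id2 mulmxBr mulmxA.
have cd : forall n, c n + d n = 0.
  move=> n.
  have e1 : rho (n + 1) *m Q (n + 1) *m zeta n = rho n *m P n.
    by rewrite -RA -mulmxA K1.
  have e2 : rho n *m P n *m zetam (n + 1) = rho (n + 1) *m Q (n + 1).
    by rewrite -RB -mulmxA K2.
  by rewrite /c /d !mulmxBr !mulmxA e1 e2 addrA subrK subrr.
exists (c 0 0 0) => n.
have hc : c n = c 0 := int_const cstep n.
have hd : d n = - c n by apply/eqP; rewrite -addr_eq0 addrC cd.
split.
  by change (c n = (c 0 0 0)%:M); rewrite hc -mx11_scalar.
change (d n = (- c 0 0 0)%:M); rewrite hd hc {1}(mx11_scalar (c 0)).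
by rewrite raddfN.
Qed.
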